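(* The Walnut group $W=(\mathrm{SO}(2,\mathbb{R})\ltimes\mathbb{H})/D$ has the topological $R_\infty$-property.
   Context: $\mathbb{H}$ is the 3-dimensional Heisenberg group of real $3\times3$ upper triangular unipotent matrices; write its element $(y_{ij})$ as $(a,b,c)$ with $a=y_{12}$, $b=y_{23}$, $c=y_{13}$. $\mathrm{GL}(2,\mathbb{R})$ acts on $\mathbb{H}$ by automorphisms via: for $\psi=(x_{ij})\in\mathrm{GL}(2,\mathbb{R})$, $\psi(a,b,c)=\big(x_{11}a+x_{12}b,\ x_{21}a+x_{22}b,\ c\det\psi-\tfrac12ab\det\psi+\tfrac12(x_{11}a+x_{12}b)(x_{21}a+x_{22}b)\big)$. The semidirect product $\mathrm{SO}(2,\mathbb{R})\ltimes\mathbb{H}$ uses the restriction of this action; its center is the center $Z=\{(0,0,c)\}$ of $\mathbb{H}$, and $D$ is an infinite discrete subgroup of $Z$. For an automorphism $\varphi$ of a group $G$, the $\varphi$-twisted conjugacy classes are the equivalence classes of $x\sim_\varphi y$ iff $y=gx\varphi(g)^{-1}$ for some $g\in G$; $R(\varphi)$ is their number. A topological group $G$ has the topological $R_\infty$-property if $R(\varphi)=\infty$ for every automorphism $\varphi$ of $G$ that is a homeomorphism. *)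

(* Defs.v *)
From HB Require Import structures.
From mathcomp Require Import all_boot all_order all_algebra generic_quotient.
From mathcomp Require Import all_classical all_reals topology normedtype.
Import numFieldNormedType.Exports.

Set Implicit Arguments.
Unset Strict Implicit.
Unset Printing Implicit Defensive.

Import Order.TTheory GRing.Theory Num.Theory.
Local Open Scope classical_set_scope.
Local Open Scope ring_scope.

Definition group_hom {T : Type} (mul : T -> T -> T) (phi : T -> T) : Prop :=
  forall x y, phi (mul x y) = mul (phi x) (phi y).

Definition homeomorphism {T : topologicalType} (phi : T -> T) : Prop :=
  exists psi : T -> T,
    [/\ cancel phi psi, cancel psi phi, continuous phi & continuous psi].

Definition homeo_automorphism {T : topologicalType} (mul : T -> T -> T)
  (phi : T -> T) : Prop := group_hom mul phi /\ homeomorphism phi.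

Definition twisted_conj {T : Type} (mul : T -> T -> T) (inv : T -> T)
  (phi : T -> T) (x y : T) : Prop :=
  exists g, y = mul (mul g x) (inv (phi g)).

Definition twisted_classes {T : Type} (mul : T -> T -> T) (inv : T -> T)
  (phi : T -> T) : set (set T) :=
  [set [set y | twisted_conj mul inv phi x y] | x in [set: T]].

Definition Reidemeister_infinite {T : Type} (mul : T -> T -> T)
  (inv : T -> T) (phi : T -> T) : Prop :=
  infinite_set (twisted_classes mul inv phi).

Definition topological_R_infinity {T : topologicalType}
  (mul : T -> T -> T) (inv : T -> T) : Prop :=
  forall phi : T -> T, homeo_automorphism mul phi ->
    Reidemeister_infinite mul inv phi.

Section Walnut.
Variable R : realType.

Definition i0 : 'I_2 := @Ordinal 2 0 isT.
Definition i1 : 'I_2 := @Ordinal 2 1 isT.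

Definition SO2set : set 'M[R]_2 :=
  [set A | A^T *m A = 1%:M /\ \det A = 1].
Definition SO2 := set_type SO2set.

Lemma SO2_mul (A B : SO2) : SO2set (val A *m val B).
Proof.
case: A B => [A /set_mem [AA dA]] [B /set_mem [BB dB]] /=; split.
  by rewrite trmx_mul mulmxA -(mulmxA B^T) AA mulmx1 BB.
by rewrite det_mulmx dA dB mulr1.
Qed.

Lemma SO2_inv (A : SO2) : SO2set (val A)^T.
Proof.
case: A => [A /set_mem [AA dA]] /=; split; last by rewrite det_tr.
by rewrite trmxK; apply: mulmx1C.
Qed.

Definition SO2mul (A B : SO2) : SO2 := @exist _ (fun M => M \in SO2set) _ (mem_set (SO2_mul A B)).
Definition SO2inv (A : SO2) : SO2 := @exist _ (fun M => M \in SO2set) _ (mem_set (SO2_inv A)).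

(** The Heisenberg group: (a,b,c) stands for the unipotent matrix with
    y12 = a, y23 = b, y13 = c. *)
Definition Heis := (R * R * R)%type.
Definition ha (h : Heis) : R := h.1.1.
Definition hb (h : Heis) : R := h.1.2.
Definition hc (h : Heis) : R := h.2.

Definition Hmul (h k : Heis) : Heis :=
  (ha h + ha k, hb h + hb k, hc h + hc k + ha h * hb k).
Definition Hinv (h : Heis) : Heis := (- ha h, - hb h, - hc h + ha h * hb h).

Definition Hact (psi : 'M[R]_2) (h : Heis) : Heis :=
  let a := ha h in let b := hb h in let c := hc h in
  let a' := psi i0 i0 * a + psi i0 i1 * b in
  let b' := psi i1 i0 * a + psi i1 i1 * b in
  (a', b', c * \det psi - 2^-1 * a * b * \det psi + 2^-1 * a' * b').

Definition G := (SO2 * Heis)%type.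
Definition Gmul (x y : G) : G :=
  (SO2mul x.1 y.1, Hmul x.2 (Hact (val x.1) y.2)).
Definition Ginv (x : G) : G :=
  (SO2inv x.1, Hact (val (SO2inv x.1)) (Hinv x.2)).

(** Subgroups of the center Z = {(0,0,c)} of H, identified with additive
    subgroups of R through the coordinate c. *)
Record Zsubgroup := {
  zcarrier : set R;
  zsub0 : zcarrier 0;
  zsubB : forall x y, zcarrier x -> zcarrier y -> zcarrier (x - y) }.

Definition discrete_subset (D : set R) : Prop :=
  forall x, D x -> exists2 e : R, 0 < e &
    forall y, D y -> `|y - x| < e -> y = x.

Variable D : Zsubgroup.

(** x ~ y iff x^-1 y lies in D (viewed inside Z), i.e. y = x d with d in D. *)
Definition Drel_prop (x y : G) : Prop :=
  [/\ x.1 = y.1, ha x.2 = ha y.2, hb x.2 = hb y.2 & zcarrier D (hc y.2 - hc x.2)].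

Definition Drel (x y : G) : bool := `[< Drel_prop x y >].

Lemma Drel_equiv : equivalence_rel Drel.
Proof.
have D0 := zsub0 D; have DB := @zsubB D.
have DN z : zcarrier D z -> zcarrier D (- z) by move=> Dz; rewrite -sub0r; exact: DB.
move=> x y z; rewrite /Drel; split.
  by apply/asboolP; split => //; rewrite subrr.
move/asboolP=> [e1 e2 e3 e4].
apply/idP/idP => /asboolP [f1 f2 f3 f4]; apply/asboolP; split;
  try congruence.
- have -> : hc z.2 - hc y.2 = (hc z.2 - hc x.2) - (hc y.2 - hc x.2)
    by rewrite opprB addrA subrK.
  exact: DB.
- have -> : hc z.2 - hc x.2 = (hc z.2 - hc y.2) - (- (hc y.2 - hc x.2))
    by rewrite opprK addrA subrK.
  exact: DB _ _ f4 (DN _ e4).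
Qed.

Lemma Drel_refl : reflexive Drel.
Proof. by move=> x; case: (Drel_equiv x x x). Qed.

Lemma Drel_sym_imp x y : Drel x y -> Drel y x.
Proof. by move=> h; case: (Drel_equiv x y x) => _ /(_ h) <-; exact: Drel_refl. Qed.

Lemma Drel_sym : symmetric Drel.
Proof. by move=> x y; apply/idP/idP; exact: Drel_sym_imp. Qed.

Lemma Drel_trans : transitive Drel.
Proof.
move=> y x z hxy hyz; case: (Drel_equiv x y z) => _ /(_ hxy) ->; exact: hyz.
Qed.

Definition Dequiv : equiv_rel G := EquivRel Drel Drel_refl Drel_sym Drel_trans.

Definition Wq := {eq_quot Dequiv}%qT.

Definition Walnut := quotient_topology Wq.

Definition Wmul (x y : Walnut) : Walnut :=
  (\pi_Walnut)%qT (Gmul (repr x) (repr y)).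
Definition Winv (x : Walnut) : Walnut := (\pi_Walnut)%qT (Ginv (repr x)).

End Walnut.

(* Main.v *)
Require Import Defs.
From HB Require Import structures.
From mathcomp Require Import all_boot all_order all_algebra generic_quotient.
From mathcomp Require Import all_classical all_reals topology normedtype.
Import numFieldNormedType.Exports.
From mathcomp Require Import ring lra.
Import Order.TTheory GRing.Theory Num.Theory.
Local Open Scope ring_scope.

Set Implicit Arguments.
Unset Strict Implicit.
Unset Printing Implicit Defensive.

Section SO2alg.
Variable R : realType.
Implicit Types (k : SO2 R).

Lemma ord2_cases (i : 'I_2) : i = i0 \/ i = i1.
Proof. by case: i => [[|[|//]] Hi]; [left|right]; apply: val_inj. Qed.

Lemma mx2_eq (A B : 'M[R]_2) : A i0 i0 = B i0 i0 -> A i0 i1 = B i0 i1 ->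
  A i1 i0 = B i1 i0 -> A i1 i1 = B i1 i1 -> A = B.
Proof.
move=> h1 h2 h3 h4; apply/matrixP => i j.
by case: (ord2_cases i) => ->; case: (ord2_cases j) => ->.
Qed.

Lemma mulmx2E (A B : 'M[R]_2) i j :
  (A *m B) i j = A i i0 * B i0 j + A i i1 * B i1 j.
Proof.
rewrite mxE big_ord_recr big_ord1 /=.
have -> : widen_ord (leqnSn 1) ord0 = i0 by apply: val_inj.
by have -> : (ord_max : 'I_2) = i1 by apply: val_inj.
Qed.

Lemma det2E (A : 'M[R]_2) : \det A = A i0 i0 * A i1 i1 - A i0 i1 * A i1 i0.
Proof.
rewrite (expand_det_row _ i0) big_ord_recr big_ord1 /= /cofactor !det_mx11 /=.
rewrite !mxE /=.
have -> : widen_ord (leqnSn 1) ord0 = i0 by apply: val_inj.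
have -> : (ord_max : 'I_2) = i1 by apply: val_inj.
have -> : lift i0 (0 : 'I_1) = i1 by apply: val_inj.
have -> : lift i1 (0 : 'I_1) = i0 by apply: val_inj.
rewrite /= expr0 expr1 !mul1r mulN1r; ring.
Qed.


Lemma sq0 (x y : R) : x ^+ 2 + y ^+ 2 = 0 -> x = 0 /\ y = 0.
Proof. by move=> h; split; nra. Qed.

Definition pc (k : SO2 R) := val k i0 i0.
Definition qc (k : SO2 R) := val k i1 i0.

Lemma SO2_ent (k : SO2 R) :
  [/\ val k i0 i1 = - qc k, val k i1 i1 = pc k & pc k ^+ 2 + qc k ^+ 2 = 1].
Proof.
case: k => [A HA]; have /set_mem [AA dA] := HA; rewrite /pc /qc /=.
have e00 := congr1 (fun M : 'M[R]_2 => M i0 i0) AA.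
have e01 := congr1 (fun M : 'M[R]_2 => M i0 i1) AA.
have e11 := congr1 (fun M : 'M[R]_2 => M i1 i1) AA.
move: e00 e01 e11; rewrite !mulmx2E !mxE /= => e00 e01 e11.
move: dA; rewrite det2E => dA.
set a := A i0 i0 in e00 e01 e11 dA *; set b := A i0 i1 in e00 e01 e11 dA *.
set c := A i1 i0 in e00 e01 e11 dA *; set d := A i1 i1 in e00 e01 e11 dA *.
have hs : (d - a) ^+ 2 + (b + c) ^+ 2 = 0.
  have -> : (d - a) ^+ 2 + (b + c) ^+ 2 =
    (a * a + c * c) + (b * b + d * d) - 2 * (a * d - b * c) by ring.
  by rewrite e00 e11 dA; ring.
have [h1 h2] := sq0 hs.
split; [lra|lra|nra].
Qed.

Lemma SO2_eqP (k k' : SO2 R) : pc k = pc k' -> qc k = qc k' -> k = k'.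
Proof.
move=> hp hq; apply: val_inj; have [a1 b1 _] := SO2_ent k.
have [a2 b2 _] := SO2_ent k'.
apply: mx2_eq => //; first by rewrite a1 a2 hq.
by rewrite b1 b2.
Qed.

Definition rotm (p q : R) : 'M[R]_2 :=
  \matrix_(i < 2, j < 2) (if i == i0 then (if j == i0 then p else - q)
                         else (if j == i0 then q else p)).

Lemma rotm_SO2 p q : p ^+ 2 + q ^+ 2 = 1 -> SO2set (rotm p q).
Proof.
move=> h; split.
  apply: mx2_eq; rewrite !mulmx2E !mxE /=; nra.
rewrite det2E !mxE /=; nra.
Qed.

Definition mkSO2 (p q : R) (h : p ^+ 2 + q ^+ 2 = 1) : SO2 R :=
  @exist _ (fun M : 'M[R]_2 => M \in @SO2set R) _ (mem_set (rotm_SO2 h)).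

Lemma pc_mk p q h : pc (@mkSO2 p q h) = p.
Proof. by rewrite /pc /= mxE. Qed.
Lemma qc_mk p q h : qc (@mkSO2 p q h) = q.
Proof. by rewrite /qc /= mxE. Qed.

Lemma pc_mul k (k2 : SO2 R) : pc (SO2mul k k2) = pc k * pc k2 - qc k * qc k2.
Proof.
rewrite /pc /= mulmx2E; have [a _ _] := SO2_ent k; rewrite a /qc; ring.
Qed.
Lemma qc_mul k (k2 : SO2 R) : qc (SO2mul k k2) = qc k * pc k2 + pc k * qc k2.
Proof.
rewrite /qc /= mulmx2E; have [_ a _] := SO2_ent k; rewrite a /pc; ring.
Qed.
Lemma pc_inv k : pc (SO2inv k) = pc k.
Proof. by rewrite /pc /= mxE. Qed.
Lemma qc_inv k : qc (SO2inv k) = - qc k.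
Proof. by rewrite /qc /= mxE; have [a _ _] := SO2_ent k. Qed.

Lemma pq1 k : pc k ^+ 2 + qc k ^+ 2 = 1.
Proof. by case: (SO2_ent k). Qed.

Lemma one_sq : (1 : R) ^+ 2 + 0 ^+ 2 = 1.
Proof. by rewrite expr1n expr0n addr0. Qed.
Definition SO2one : SO2 R := mkSO2 one_sq.

Lemma SO2mulC k (k2 : SO2 R) : SO2mul k k2 = SO2mul k2 k.
Proof. apply: SO2_eqP; rewrite ?pc_mul ?qc_mul; ring. Qed.
Lemma SO2mulA (k1 k2 k3 : SO2 R) : SO2mul k1 (SO2mul k2 k3) = SO2mul (SO2mul k1 k2) k3.
Proof. by apply: SO2_eqP; rewrite ?pc_mul ?qc_mul ?pc_mul; ring. Qed.
Lemma SO2mul1 k : SO2mul SO2one k = k.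
Proof. apply: SO2_eqP; rewrite ?pc_mul ?qc_mul ?pc_mk ?qc_mk; ring. Qed.
Lemma SO2mulV k : SO2mul (SO2inv k) k = SO2one.
Proof.
apply: SO2_eqP; rewrite ?pc_mul ?qc_mul ?pc_mk ?qc_mk ?pc_inv ?qc_inv;
 have := pq1 k; nra.
Qed.

End SO2alg.

Local Open Scope ring_scope.

Set Implicit Arguments.
Unset Strict Implicit.
Unset Printing Implicit Defensive.

Section Galg.
Variable R : realType.
Implicit Types (k : SO2 R) (x y z : G R).

Lemma detSO2 k : \det (val k) = 1.
Proof. by case: k => [A HA]; have /set_mem [_ dA] := HA. Qed.

Lemma Hact_SO2 k (h : Heis R) : Hact (val k) h =
  (pc k * ha h - qc k * hb h, qc k * ha h + pc k * hb h,
   hc h - 2^-1 * ha h * hb h + 2^-1 * (pc k * ha h - qc k * hb h) * (qc k * ha h + pc k * hb h)).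
Proof.
rewrite /Hact detSO2; have [e1 e2 _] := SO2_ent k.
rewrite e1 e2 !mulr1 /pc /qc; congr (_, _, _); ring.
Qed.

Lemma Gext x y : x.1 = y.1 -> ha x.2 = ha y.2 -> hb x.2 = hb y.2 -> hc x.2 = hc y.2 -> x = y.
Proof.
case: x => k [[a b] c]; case: y => k' [[a' b'] c']; rewrite /ha /hb /hc /=.
by move=> -> -> -> ->.
Qed.

Definition G1 : G R := (SO2one R, (0, 0, 0)).

Lemma haM x y : ha (Gmul x y).2 = ha x.2 + (pc x.1 * ha y.2 - qc x.1 * hb y.2).
Proof. by rewrite /Gmul /= Hact_SO2. Qed.
Lemma hbM x y : hb (Gmul x y).2 = hb x.2 + (qc x.1 * ha y.2 + pc x.1 * hb y.2).
Proof. by rewrite /Gmul /= Hact_SO2. Qed.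
Lemma hcM x y : hc (Gmul x y).2 = hc x.2 +
  (hc y.2 - 2^-1 * ha y.2 * hb y.2 + 2^-1 * (pc x.1 * ha y.2 - qc x.1 * hb y.2) * (qc x.1 * ha y.2 + pc x.1 * hb y.2))
  + ha x.2 * (qc x.1 * ha y.2 + pc x.1 * hb y.2).
Proof. by rewrite /Gmul Hact_SO2 /Hmul /ha /hb /hc /=. Qed.
Lemma rM x y : (Gmul x y).1 = SO2mul x.1 y.1.
Proof. by []. Qed.

Lemma haV x : ha (Ginv x).2 = - pc x.1 * ha x.2 - qc x.1 * hb x.2.
Proof. rewrite /Ginv Hact_SO2 pc_inv qc_inv /= /Hinv /ha /hb /=. ring. Qed.
Lemma hbV x : hb (Ginv x).2 = qc x.1 * ha x.2 - pc x.1 * hb x.2.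
Proof. rewrite /Ginv Hact_SO2 pc_inv qc_inv /= /Hinv /ha /hb /=; ring. Qed.
Lemma hcV x : hc (Ginv x).2 = - hc x.2 + ha x.2 * hb x.2
  - 2^-1 * ha x.2 * hb x.2
  + 2^-1 * (- pc x.1 * ha x.2 - qc x.1 * hb x.2) * (qc x.1 * ha x.2 - pc x.1 * hb x.2).
Proof. rewrite /Ginv Hact_SO2 pc_inv qc_inv /= /Hinv /ha /hb /hc /=; ring. Qed.
Lemma rV x : (Ginv x).1 = SO2inv x.1.
Proof. by []. Qed.

Ltac gsimp := repeat rewrite ?haM ?hbM ?hcM ?rM ?haV ?hbV ?hcV ?rV; repeat rewrite ?pc_mul ?qc_mul ?pc_inv ?qc_inv ?pc_mk ?qc_mk.

Lemma haE (a b c : R) : ha (a, b, c) = a. Proof. by []. Qed.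
Lemma hbE (a b c : R) : hb (a, b, c) = b. Proof. by []. Qed.
Lemma hcE (a b c : R) : hc (a, b, c) = c. Proof. by []. Qed.

Lemma constr_eq (L Rr Q s : R) : L - Rr = Q * (s - 1) -> s = 1 -> L = Rr.
Proof. by move=> h hs; apply/eqP; rewrite -subr_eq0 h hs subrr mulr0. Qed.

Lemma GmulA x y z : Gmul x (Gmul y z) = Gmul (Gmul x y) z.
Proof.
apply: Gext; gsimp; first exact: SO2mulA.
- ring.
- ring.
- apply: (@constr_eq _ _ ((- (1%:R / 2%:R) * (ha y.2) * (ha z.2) * (qc y.1)) + (- (1%:R / 2%:R) * (ha y.2) * (hb z.2) * (pc y.1)) + ((1%:R / 2%:R) * (ha z.2) * (hb y.2) * (pc y.1)) + (- (1%:R / 2%:R) * (hb y.2) * (hb z.2) * (qc y.1))) (pc x.1 ^+ 2 + qc x.1 ^+ 2)); [by field | exact: pq1].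
Qed.

Lemma Gmul1 x : Gmul G1 x = x.
Proof.
apply: Gext; gsimp; first exact: SO2mul1.
all: rewrite /G1 ?haE ?hbE ?hcE; by field.
Qed.

Lemma Gmulr1 x : Gmul x G1 = x.
Proof.
apply: Gext; gsimp; first by rewrite SO2mulC SO2mul1.
all: rewrite /G1 ?haE ?hbE ?hcE; by field.
Qed.

Lemma GmulV x : Gmul (Ginv x) x = G1.
Proof.
apply: Gext; gsimp; first exact: SO2mulV.
all: rewrite /G1 ?haE ?hbE ?hcE; by field.
Qed.

Lemma GmulrV x : Gmul x (Ginv x) = G1.
Proof.
apply: Gext; gsimp; first by rewrite SO2mulC SO2mulV.
- rewrite /G1 haE.
  apply: (@constr_eq _ _ (- ha x.2) (pc x.1 ^+ 2 + qc x.1 ^+ 2)); [by field | exact: pq1].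
- rewrite /G1 hbE.
  apply: (@constr_eq _ _ (- hb x.2) (pc x.1 ^+ 2 + qc x.1 ^+ 2)); [by field | exact: pq1].
- rewrite /G1 hcE.
  apply: (@constr_eq _ _ ((- (1%:R / 2%:R) * (ha x.2) * (hb x.2)) + ((1%:R / 2%:R) * (ha x.2) * (hb x.2) * (pc x.1) ^+ 2) + ((1%:R / 2%:R) * (ha x.2) * (hb x.2) * (qc x.1) ^+ 2)) (pc x.1 ^+ 2 + qc x.1 ^+ 2)); [by field | exact: pq1].
Qed.

End Galg.

Local Open Scope ring_scope.

Set Implicit Arguments.
Unset Strict Implicit.
Unset Printing Implicit Defensive.

Section Wgroup.
Variable R : realType.
Variable D : Zsubgroup R.
Implicit Types (x y : G R).

Lemma D0 : zcarrier D 0. Proof. exact: zsub0. Qed.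
Lemma DB a b : zcarrier D a -> zcarrier D b -> zcarrier D (a - b).
Proof. exact: zsubB. Qed.
Lemma DN a : zcarrier D a -> zcarrier D (- a).
Proof. by move=> h; rewrite -sub0r; apply: DB => //; exact: D0. Qed.
Lemma DD a b : zcarrier D a -> zcarrier D b -> zcarrier D (a + b).
Proof. by move=> ha hb; rewrite -[b]opprK; apply: DB => //; exact: DN. Qed.

Lemma Drel_mul x x' y y' : Drel_prop D x x' -> Drel_prop D y y' ->
  Drel_prop D (Gmul x y) (Gmul x' y').
Proof.
case=> e1 e2 e3 e4 [f1 f2 f3 f4]; split.
- by rewrite !rM e1 f1.
- by rewrite !haM -e1 -e2 -f2 -f3.
- by rewrite !hbM -e1 -e3 -f2 -f3.
- rewrite !hcM -e1 -e2 -f2 -f3.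
  match goal with |- zcarrier _ ?e =>
    have -> : e = (hc x'.2 - hc x.2) + (hc y'.2 - hc y.2) by ring end.
  exact: DD.
Qed.

Lemma Drel_inv x x' : Drel_prop D x x' -> Drel_prop D (Ginv x) (Ginv x').
Proof.
case=> e1 e2 e3 e4; split.
- by rewrite !rV e1.
- by rewrite !haV -e1 -e2 -e3.
- by rewrite !hbV -e1 -e2 -e3.
- rewrite !hcV -e1 -e2 -e3.
  match goal with |- zcarrier _ ?e =>
    have -> : e = - (hc x'.2 - hc x.2) by ring end.
  exact: DN.
Qed.

Definition piW : G R -> Walnut D := (\pi_(Walnut D))%qT.
Lemma piWP x y : piW x = piW y <-> Drel_prop D x y.
Proof.
rewrite /piW; split; first by move/eqmodP/asboolP.
by move=> h; apply/eqmodP; apply/asboolP.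
Qed.
Lemma pirepr (w : Walnut D) : piW (repr w) = w.
Proof. exact: reprK. Qed.
Lemma repr_pi x : Drel_prop D (repr (piW x)) x.
Proof. by apply/piWP; rewrite pirepr. Qed.

Lemma WmulE x y : Wmul (piW x) (piW y) = piW (Gmul x y).
Proof. by apply/piWP; apply: Drel_mul; apply: repr_pi. Qed.
Lemma WinvE x : Winv (piW x) = piW (Ginv x).
Proof. by apply/piWP; apply: Drel_inv; apply: repr_pi. Qed.

Definition W1 : Walnut D := piW (G1 R).

Lemma Wind (P : Walnut D -> Prop) : (forall x, P (piW x)) -> forall w, P w.
Proof. by move=> h w; rewrite -(pirepr w). Qed.

Lemma WmulA (a b c : Walnut D) : Wmul a (Wmul b c) = Wmul (Wmul a b) c.
Proof.
by elim/Wind: a => x; elim/Wind: b => y; elim/Wind: c => z; rewrite !WmulE GmulA.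
Qed.
Lemma Wmul1 (a : Walnut D) : Wmul W1 a = a.
Proof. by elim/Wind: a => x; rewrite /W1 WmulE Gmul1. Qed.
Lemma Wmulr1 (a : Walnut D) : Wmul a W1 = a.
Proof. by elim/Wind: a => x; rewrite /W1 WmulE Gmulr1. Qed.
Lemma WmulV (a : Walnut D) : Wmul (Winv a) a = W1.
Proof. by elim/Wind: a => x; rewrite WinvE WmulE GmulV. Qed.
Lemma WmulrV (a : Walnut D) : Wmul a (Winv a) = W1.
Proof. by elim/Wind: a => x; rewrite WinvE WmulE GmulrV. Qed.

Lemma WmulK (a b c : Walnut D) : Wmul a b = Wmul a c -> b = c.
Proof.
move=> h; rewrite -(Wmul1 b) -(Wmul1 c) -(WmulV a) -!WmulA h //.
Qed.
Lemma WmulKr (a b c : Walnut D) : Wmul b a = Wmul c a -> b = c.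
Proof.
move=> h; rewrite -(Wmulr1 b) -(Wmulr1 c) -(WmulrV a) !WmulA h //.
Qed.
Lemma Winv_uniq (a b : Walnut D) : Wmul a b = W1 -> b = Winv a.
Proof. by move=> h; apply: (@WmulK a); rewrite h WmulrV. Qed.
Lemma WinvM (a b : Walnut D) : Winv (Wmul a b) = Wmul (Winv b) (Winv a).
Proof.
apply/esym/Winv_uniq.
by rewrite -WmulA (WmulA b) WmulrV Wmul1 WmulrV.
Qed.
Lemma WinvK (a : Walnut D) : Winv (Winv a) = a.
Proof. by apply/esym/Winv_uniq; rewrite WmulV. Qed.
Lemma Winv1 : Winv W1 = W1.
Proof. by apply/esym/Winv_uniq; rewrite Wmul1. Qed.

Variable phi : Walnut D -> Walnut D.
Hypothesis phiM : group_hom (@Wmul R D) phi.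

Lemma phi1 : phi W1 = W1.
Proof.
apply: (@WmulK (phi W1)); rewrite -phiM Wmul1 Wmulr1 //.
Qed.
Lemma phiV a : phi (Winv a) = Winv (phi a).
Proof.
by apply: Winv_uniq; rewrite -phiM WmulrV phi1.
Qed.

End Wgroup.

Arguments piW {R D}.
Arguments piWP {R D}.
Arguments repr_pi {R D}.
Arguments WmulE {R D}.
Arguments WinvE {R D}.
Arguments W1 {R D}.

Local Open Scope ring_scope.

Set Implicit Arguments.
Unset Strict Implicit.
Unset Printing Implicit Defensive.

Section Nsub.
Variable R : realType.
Variable D : Zsubgroup R.
Implicit Types (x y : G R) (a b : Walnut D).
Local Notation pw := (@piW R D).
Local Notation one := (SO2one R).

Lemma pc_one : pc one = 1. Proof. exact: pc_mk. Qed.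
Lemma qc_one : qc one = 0. Proof. exact: qc_mk. Qed.

Ltac gsimp := repeat rewrite ?haM ?hbM ?hcM ?rM ?haV ?hbV ?hcV ?rV;
  repeat rewrite ?pc_mul ?qc_mul ?pc_inv ?qc_inv ?pc_mk ?qc_mk ?pc_one ?qc_one ?haE ?hbE ?hcE.

Definition rho a : SO2 R := (repr a).1.
Definition pa a : R := ha (repr a).2.
Definition pb a : R := hb (repr a).2.
Definition pz a : R := hc (repr a).2.

Lemma rhoE x : rho (pw x) = x.1. Proof. by case: (repr_pi (D:=D) x). Qed.
Lemma paE x : pa (pw x) = ha x.2. Proof. by case: (repr_pi (D:=D) x). Qed.
Lemma pbE x : pb (pw x) = hb x.2. Proof. by case: (repr_pi (D:=D) x). Qed.

Lemma Wform a : a = pw (rho a, (pa a, pb a, pz a)).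
Proof. by rewrite -{1}(pirepr a) /rho /pa /pb /pz; case: (repr a) => k [[u v] w]. Qed.

Lemma pi_eqD k (u v c c' : R) : zcarrier D (c' - c) ->
  pw (k, (u, v, c)) = pw (k, (u, v, c')).
Proof. by move=> h; apply/(piWP (D:=D)); split. Qed.

Definition iotaW (u v : R) : Walnut D := pw (one, (u, v, 0)).
Definition zc (c : R) : Walnut D := pw (one, (0, 0, c)).
Definition ek (k : SO2 R) : Walnut D := pw (k, (0, 0, 0)).
Definition Wcomm a b := Wmul (Wmul a b) (Wmul (Winv a) (Winv b)).

Lemma rhoM a b : rho (Wmul a b) = SO2mul (rho a) (rho b).
Proof. by elim/Wind: a => x; elim/Wind: b => y; rewrite WmulE !rhoE. Qed.
Lemma rhoV a : rho (Winv a) = SO2inv (rho a).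
Proof. by elim/Wind: a => x; rewrite WinvE !rhoE. Qed.
Lemma paM a b : pa (Wmul a b) = pa a + (pc (rho a) * pa b - qc (rho a) * pb b).
Proof. by elim/Wind: a => x; elim/Wind: b => y; rewrite WmulE !paE !pbE !rhoE haM. Qed.
Lemma pbM a b : pb (Wmul a b) = pb a + (qc (rho a) * pa b + pc (rho a) * pb b).
Proof. by elim/Wind: a => x; elim/Wind: b => y; rewrite WmulE !paE !pbE !rhoE hbM. Qed.
Lemma paV a : pa (Winv a) = - pc (rho a) * pa a - qc (rho a) * pb a.
Proof. by elim/Wind: a => x; rewrite WinvE !paE !pbE !rhoE haV. Qed.
Lemma pbV a : pb (Winv a) = qc (rho a) * pa a - pc (rho a) * pb a.
Proof. by elim/Wind: a => x; rewrite WinvE !paE !pbE !rhoE hbV. Qed.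

Lemma SO2comm (k1 k2 : SO2 R) :
  SO2mul (SO2mul k1 k2) (SO2mul (SO2inv k1) (SO2inv k2)) = one.
Proof.
rewrite (SO2mulC (SO2inv k1)) SO2mulA -(SO2mulA k1 k2) (SO2mulC k2 (SO2inv k2)) SO2mulV.
by rewrite (SO2mulC k1 one) SO2mul1 SO2mulC SO2mulV.
Qed.

Lemma rho_comm a b : rho (Wcomm a b) = one.
Proof. by rewrite /Wcomm !rhoM !rhoV SO2comm. Qed.

Lemma comm_N (u v c u' v' c' : R) :
  Wcomm (pw (one, (u, v, c))) (pw (one, (u', v', c'))) = zc (u * v' - u' * v).
Proof.
rewrite /Wcomm !WinvE !WmulE /zc; congr pw; apply: Gext; gsimp.
- apply: SO2_eqP; gsimp; ring.
- by field.
- by field.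
- by field.
Qed.

Lemma sq_J : (0 : R) ^+ 2 + 1 ^+ 2 = 1.
Proof. by rewrite expr0n expr1n add0r. Qed.
Definition SJ : SO2 R := mkSO2 sq_J.

Lemma commJ (u1 u2 : R) :
  Wcomm (ek SJ) (iotaW u1 u2) = pw (one, (- u1 - u2, u1 - u2, u2 ^+ 2)).
Proof.
rewrite /Wcomm /ek /iotaW /SJ !WinvE !WmulE; congr pw; apply: Gext; gsimp.
- apply: SO2_eqP; gsimp; ring.
- by field.
- by field.
- by field.
Qed.

Lemma zc_comm (d : R) : zc d = Wcomm (iotaW d 0) (iotaW 0 1).
Proof. by rewrite /iotaW comm_N /zc mulr1 mul0r subr0. Qed.

Lemma Nform a : rho a = one -> a = pw (one, (pa a, pb a, pz a)).
Proof. by move=> h; rewrite {1}(Wform a) h. Qed.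

Lemma N_zc (u v c d : R) : Wmul (pw (one, (u, v, c))) (zc d) = pw (one, (u, v, c + d)).
Proof.
rewrite /zc WmulE; congr pw; apply: Gext; gsimp.
- apply: SO2_eqP; gsimp; ring.
- by field.
- by field.
- by field.
Qed.

Lemma N_decomp a : rho a = one ->
  exists a1 b1 a2 b2, a = Wmul (Wcomm a1 b1) (Wcomm a2 b2).
Proof.
move=> h; set s := pa a; set t := pb a; set c := pz a.
set u1 := (t - s) / 2; set u2 := - (s + t) / 2.
exists (ek SJ), (iotaW u1 u2), (iotaW (c - u2 ^+ 2) 0), (iotaW 0 1).
rewrite commJ -zc_comm N_zc (Nform h); congr pw; congr (_, (_, _, _)).
- by rewrite /u1 /u2; field.
- by rewrite /u1 /u2; field.
- ring.
Qed.

Definition conjW a b := Wmul (Wmul a b) (Winv a).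

Lemma conjN a b : rho b = one ->
  [/\ rho (conjW a b) = one,
      pa (conjW a b) = pc (rho a) * pa b - qc (rho a) * pb b &
      pb (conjW a b) = qc (rho a) * pa b + pc (rho a) * pb b].
Proof.
elim/Wind: a => x; elim/Wind: b => y => hy.
have {}hy : y.1 = one by rewrite -(rhoE y).
rewrite /conjW !WinvE !WmulE !rhoE !paE !pbE; gsimp; rewrite hy; gsimp; split.
- apply: SO2_eqP; gsimp; first by apply: (@constr_eq _ _ _ 1 (pc x.1 ^+ 2 + qc x.1 ^+ 2)); [by field | exact: pq1].
  ring.
- apply: (@constr_eq _ _ _ (- ha x.2) (pc x.1 ^+ 2 + qc x.1 ^+ 2)); [by field | exact: pq1].
- apply: (@constr_eq _ _ _ (- hb x.2) (pc x.1 ^+ 2 + qc x.1 ^+ 2)); [by field | exact: pq1].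
Qed.

Lemma paMN a b : rho a = one -> pa (Wmul a b) = pa a + pa b.
Proof. by move=> h; rewrite paM h pc_one qc_one; ring. Qed.
Lemma pbMN a b : rho a = one -> pb (Wmul a b) = pb a + pb b.
Proof. by move=> h; rewrite pbM h pc_one qc_one; ring. Qed.
Lemma paVN a : rho a = one -> pa (Winv a) = - pa a.
Proof. by move=> h; rewrite paV h pc_one qc_one; ring. Qed.
Lemma pbVN a : rho a = one -> pb (Winv a) = - pb a.
Proof. by move=> h; rewrite pbV h pc_one qc_one; ring. Qed.
Lemma rhoMN a b : rho a = one -> rho b = one -> rho (Wmul a b) = one.
Proof. by move=> h1 h2; rewrite rhoM h1 h2 SO2mul1. Qed.
Lemma rhoVN a : rho a = one -> rho (Winv a) = one.
Proof. by move=> h; rewrite rhoV h; apply: SO2_eqP; gsimp; ring. Qed.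

Lemma rho_iota u v : rho (iotaW u v) = one. Proof. by rewrite rhoE. Qed.
Lemma pa_iota u v : pa (iotaW u v) = u. Proof. by rewrite paE. Qed.
Lemma pb_iota u v : pb (iotaW u v) = v. Proof. by rewrite pbE. Qed.
Lemma rho_zc c : rho (zc c) = one. Proof. by rewrite rhoE. Qed.
Lemma pa_zc c : pa (zc c) = 0. Proof. by rewrite paE. Qed.
Lemma pb_zc c : pb (zc c) = 0. Proof. by rewrite pbE. Qed.
Lemma rho_ek k : rho (ek k) = k. Proof. by rewrite rhoE. Qed.

Lemma zc_D c : zc c = W1 <-> zcarrier D c.
Proof.
rewrite /zc /W1 /G1; split.
  by move/piWP => [_ _ _]; rewrite hcE sub0r => /DN; rewrite opprK.
by move=> h; apply/piWP; split => //; rewrite hcE sub0r; apply: DN.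
Qed.

End Nsub.

Arguments ek {R D}.
Arguments iotaW {R D}.
Arguments zc {R D}.

Local Open Scope ring_scope.

Set Implicit Arguments.
Unset Strict Implicit.
Unset Printing Implicit Defensive.

Section Phi.
Variable R : realType.
Variable D : Zsubgroup R.
Local Notation pw := (@piW R D).
Local Notation one := (SO2one R).
Local Notation W := (Walnut D).
Local Notation iotaW := (@iotaW R D).
Local Notation zc := (@zc R D).
Local Notation ek := (@ek R D).
Implicit Types (a b : W).

Ltac gsimp := repeat rewrite ?haM ?hbM ?hcM ?rM ?haV ?hbV ?hcV ?rV;
  repeat rewrite ?pc_mul ?qc_mul ?pc_inv ?qc_inv ?pc_mk ?qc_mk ?pc_one ?qc_one ?haE ?hbE ?hcE.

Lemma split_a a : a = Wmul (pw (one, (pa a, pb a, pz a))) (ek (rho a)).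
Proof.
rewrite {1}(Wform a) /ek WmulE; congr pw; apply: Gext; gsimp.
- by rewrite SO2mul1.
- ring.
- ring.
- by field.
Qed.

Lemma Nsplit a : rho a = one -> a = Wmul (iotaW (pa a) (pb a)) (zc (pz a)).
Proof. by move=> h; rewrite /iotaW N_zc add0r -Nform. Qed.

Lemma iota_mul (u v u' v' : R) :
  Wmul (iotaW u v) (iotaW u' v') = Wmul (iotaW (u + u') (v + v')) (zc (u * v')).
Proof.
rewrite {3}/iotaW N_zc /iotaW WmulE; congr pw; apply: Gext; gsimp.
- by rewrite SO2mul1.
- ring.
- ring.
- by field.
Qed.

Lemma conj_ek_iota (k : SO2 R) (u v : R) : conjW (ek k) (iotaW u v) =
  Wmul (iotaW (pc k * u - qc k * v) (qc k * u + pc k * v)) (zc (pz (conjW (ek k) (iotaW u v)))).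
Proof.
have [h1 h2 h3] := conjN (ek k) (rho_iota D u v).
by rewrite {1}(Nsplit h1) h2 h3 rho_ek !pa_iota !pb_iota.
Qed.

Variable phi : W -> W.
Hypothesis phiM : group_hom (@Wmul R D) phi.
Hypothesis phi_inj : injective phi.

Lemma phi_comm a b : phi (Wcomm a b) = Wcomm (phi a) (phi b).
Proof. by rewrite /Wcomm !phiM !(phiV phiM). Qed.

Lemma phi_conj a b : phi (conjW a b) = conjW (phi a) (phi b).
Proof. by rewrite /conjW !phiM (phiV phiM). Qed.

Lemma rhophiN a : rho a = one -> rho (phi a) = one.
Proof.
move=> /N_decomp [a1 [b1 [a2 [b2 ->]]]].
by rewrite phiM !phi_comm rhoM !rho_comm SO2mul1.
Qed.

Definition sigma k := rho (phi (ek k)).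

Lemma rhophi a : rho (phi a) = sigma (rho a).
Proof.
rewrite {1}(split_a a) phiM rhoM rhophiN ?rhoE // SO2mul1 //.
Qed.

Definition Af (u v : R) := pa (phi (iotaW u v)).
Definition Bf (u v : R) := pb (phi (iotaW u v)).

Lemma rhophi_iota (u v : R) : rho (phi (iotaW u v)) = one.
Proof. exact/rhophiN/rho_iota. Qed.

Lemma phi_zc (d : R) : phi (zc d) = zc (Af d 0 * Bf 0 1 - Af 0 1 * Bf d 0).
Proof.
rewrite zc_comm phi_comm.
rewrite [phi (iotaW d 0)](Nform (rhophi_iota d 0)) [phi (iotaW 0 1)](Nform (rhophi_iota 0 1)).
by rewrite comm_N.
Qed.

Lemma pa_phi_zc (d : R) : pa (phi (zc d)) = 0. Proof. by rewrite phi_zc pa_zc. Qed.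
Lemma pb_phi_zc (d : R) : pb (phi (zc d)) = 0. Proof. by rewrite phi_zc pb_zc. Qed.
Lemma rho_phi_zc (d : R) : rho (phi (zc d)) = one. Proof. by rewrite phi_zc rho_zc. Qed.

Lemma phiN_proj n : rho n = one -> pa (phi n) = Af (pa n) (pb n) /\ pb (phi n) = Bf (pa n) (pb n).
Proof.
move=> h; have e := Nsplit h; split.
- by rewrite {1}e phiM paMN ?rhophi_iota // pa_phi_zc addr0.
- by rewrite {1}e phiM pbMN ?rhophi_iota // pb_phi_zc addr0.
Qed.

Lemma Af_add (u v u' v' : R) : Af (u + u') (v + v') = Af u v + Af u' v'.
Proof.
have := congr1 (fun w => pa (phi w)) (iota_mul u v u' v').
by rewrite /= !phiM !paMN ?rhophi_iota // pa_phi_zc addr0.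
Qed.
Lemma Bf_add (u v u' v' : R) : Bf (u + u') (v + v') = Bf u v + Bf u' v'.
Proof.
have := congr1 (fun w => pb (phi w)) (iota_mul u v u' v').
by rewrite /= !phiM !pbMN ?rhophi_iota // pb_phi_zc addr0.
Qed.

Lemma intertwine (k : SO2 R) (u v : R) :
  Af (pc k * u - qc k * v) (qc k * u + pc k * v) = pc (sigma k) * Af u v - qc (sigma k) * Bf u v /\
  Bf (pc k * u - qc k * v) (qc k * u + pc k * v) = qc (sigma k) * Af u v + pc (sigma k) * Bf u v.
Proof.
rewrite /Af /Bf /sigma.
have e := congr1 phi (conj_ek_iota k u v).
rewrite phi_conj phiM in e.
have [_ h2 h3] := conjN (phi (ek k)) (rhophi_iota u v).
split.
- have := congr1 (@pa R D) e; rewrite h2 paMN ?rhophi_iota // pa_phi_zc addr0 => <-.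
  by [].
- have := congr1 (@pb R D) e; rewrite h3 pbMN ?rhophi_iota // pb_phi_zc addr0 => <-.
  by [].
Qed.

End Phi.

Local Open Scope ring_scope.

Set Implicit Arguments.
Unset Strict Implicit.
Unset Printing Implicit Defensive.

Section Ana.
Variable R : realType.

Section Add.
Variable f : R -> R.
Hypothesis fadd : forall a b, f (a + b) = f a + f b.

Lemma fadd0 : f 0 = 0.
Proof. have := fadd 0 0; rewrite addr0; lra. Qed.
Lemma faddN a : f (- a) = - f a.
Proof. by apply/eqP; rewrite -addr_eq0 -fadd addNr fadd0. Qed.
Lemma faddn (n : nat) a : f (n%:R * a) = n%:R * f a.
Proof.
elim: n => [|n IH]; first by rewrite !mul0r fadd0.
by rewrite -addn1 natrD !mulrDl !mul1r fadd IH.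
Qed.
Lemma faddz (z : int) a : f (z%:~R * a) = z%:~R * f a.
Proof.
case: z => n.
  have e : (Posz n)%:~R = n%:R :> R by [].
  by rewrite e faddn.
have e : (Negz n)%:~R = - (n.+1)%:R :> R by rewrite NegzE mulrNz.
by rewrite e !mulNr faddN faddn.
Qed.

Lemma additive_bounded0 (K : R) :
  f 1 = 0 -> (forall r, 0 <= r <= 1 -> `|f r| <= K) -> forall t, f t = 0.
Proof.
move=> f1 hK t.
have fz (z : int) : f z%:~R = 0 by rewrite -[z%:~R]mulr1 faddz f1 mulr0.
have fn (n : nat) : `|n%:R * f t| <= K.
  rewrite -faddn.
  set y := n%:R * t.
  have /andP [h1 h2] := floor_itv y.
  have -> : y = (y - (Num.floor y)%:~R) + (Num.floor y)%:~R by rewrite subrK.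
  rewrite fadd fz addr0; apply: hK.
  rewrite subr_ge0 h1 /= lerBlDr addrC.
  by apply: ltW; move: h2; rewrite intrD.
case: (eqVneq (f t) 0) => [-> //|ft0].
have npos : 0 < `|f t| by rewrite normr_gt0.
have K0 : 0 <= K by apply: le_trans (fn 0%N); rewrite normr_ge0.
set M := K / `|f t|.
have M0 : 0 <= M by rewrite /M divr_ge0 // ltW.
have := archi_boundP M0; set n := Num.Def.archi_bound M => hn.
have := fn n; rewrite normrM ger0_norm // => hle.
have : M * `|f t| < n%:R * `|f t| by rewrite ltr_pM2r.
rewrite /M mulfVK ?normr_eq0 // => hlt.
by move: (lt_le_trans hlt hle); rewrite ltxx.
Qed.

End Add.

Lemma bounded_additive (f : R -> R) (K : R) :
  (forall a b, f (a + b) = f a + f b) ->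
  (forall r, 0 <= r <= 1 -> `|f r| <= K) -> forall t, f t = t * f 1.
Proof.
move=> fadd hK t.
have gadd a b : (fun r => f r - r * f 1) (a + b) =
   (fun r => f r - r * f 1) a + (fun r => f r - r * f 1) b.
  by rewrite /= fadd mulrDl opprD addrACA.
have := @additive_bounded0 (fun r => f r - r * f 1) gadd (K + `|f 1|).
move=> /(_ _ _ t) /= h; apply/eqP; rewrite -subr_eq0; apply/eqP; apply: h.
  by rewrite mul1r subrr.
move=> r /andP [r0 r1]; apply: (le_trans (ler_normB _ _)); apply: lerD.
  by apply: hK; rewrite r0.
by rewrite normrM ger0_norm // ler_piMl.
Qed.

Lemma geom_small (r e : R) : 0 <= r -> r < 1 -> 0 < e -> exists n : nat, r ^+ n < e.
Proof.
move=> r0 r1 e0.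
case: (eqVneq r 0) => [->|rn0]; first by exists 1%N; rewrite expr1.
have rp : 0 < r by rewrite lt0r rn0.
set h := r^-1 - 1.
have hp : 0 < h by rewrite /h subr_gt0 invf_gt1.
have bern (n : nat) : 1 + n%:R * h <= (1 + h) ^+ n.
  elim: n => [|n IH]; first by rewrite mul0r addr0 expr0.
  rewrite exprSr -natr1.
  have hpos : 0 <= (1 + h) ^+ n by rewrite exprn_ge0 // addr_ge0 // ltW.
  have n0 : 0 <= n%:R :> R by [].
  nra.
have e0' : 0 <= e^-1 / h by rewrite divr_ge0 // ?invr_ge0 ltW.
have := archi_boundP e0'; set n := Num.Def.archi_bound _ => hn.
exists n.
have h1 : e^-1 < (r^-1) ^+ n.
  have : e^-1 / h * h < n%:R * h by rewrite ltr_pM2r.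
  rewrite mulfVK ?gt_eqF // => hlt.
  have -> : r^-1 = 1 + h by rewrite /h; ring.
  apply: (lt_le_trans hlt); apply: le_trans (bern n); rewrite lerDr.
  done.
have rn : 0 < r ^+ n by rewrite exprn_gt0.
by move: h1; rewrite exprVn -(ltf_pV2 (x := e)) ?invrK //.
Qed.

Lemma disc_scale (S : set R) (d0 dl : R) :
  S 0 -> discrete_subset S -> S d0 -> d0 != 0 ->
  (forall d, S d -> S (dl * d)) -> (forall c, S (dl * c) -> S c) ->
  `|dl| = 1.
Proof.
move=> S0 hdisc Sd0 d0n hm hi.
have [e e0 he] := hdisc 0 S0.
have dl0 : dl != 0.
  apply/negP => /eqP dl0.
  have : S (e / 2) by apply: hi; rewrite dl0 mul0r.
  move=> /he; rewrite subr0 ger0_norm ?divr_ge0 ?ltW // => /(_ _).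
  have : e / 2 < e by rewrite ltr_pdivrMr // ltr_pMr // ltr1n.
  move=> lt /(_ lt) /eqP; rewrite mulf_eq0 invr_eq0 pnatr_eq0 orbF gt_eqF //.
suff small (r : R) : r != 0 -> `|r| < 1 -> (forall d, S d -> S (r * d)) -> False.
  case: (ltgtP `|dl| 1) => // [lt|gt].
    by case: (small dl dl0 lt hm).
  exfalso; apply: (small dl^-1); first by rewrite invr_eq0.
    by rewrite normrV ?unitfE // invf_lt1 // (lt_trans ltr01).
  by move=> d Sd; apply: hi; rewrite mulrA mulfV // mul1r.
move=> rn0 r1 hr.
have Srn (n : nat) : S (r ^+ n * d0).
  elim: n => [|n IH]; first by rewrite expr0 mul1r.
  by rewrite exprS -mulrA; apply: hr.
have d0p : 0 < `|d0| by rewrite normr_gt0.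
have [n hn] := geom_small (normr_ge0 r) r1 (divr_gt0 e0 d0p).
have := he _ (Srn n); rewrite subr0 normrM normrX.
have : `|r| ^+ n * `|d0| < e by rewrite -ltr_pdivlMr.
move=> lt /(_ lt) /eqP; rewrite mulf_eq0 expf_eq0 (negPf d0n) orbF.
by case/andP=> _ /eqP r0; move: rn0; rewrite r0 eqxx.
Qed.

End Ana.

Local Open Scope ring_scope.

Set Implicit Arguments.
Unset Strict Implicit.
Unset Printing Implicit Defensive.

Section Lin.
Variable R : realType.
Variable D : Zsubgroup R.
Local Notation W := (Walnut D).
Local Notation one := (SO2one R).
Variable phi : W -> W.
Hypothesis phiM : group_hom (@Wmul R D) phi.

Local Notation A := (Af phi).
Local Notation B := (Bf phi).

Lemma pc_le1 (k : SO2 R) : `|pc k| <= 1.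
Proof. have := pq1 k; rewrite ler_norml => h; apply/andP; split; nra. Qed.
Lemma qc_le1 (k : SO2 R) : `|qc k| <= 1.
Proof. have := pq1 k; rewrite ler_norml => h; apply/andP; split; nra. Qed.

Lemma comb_le (p q X Z : R) : `|p| <= 1 -> `|q| <= 1 -> `|p * X + q * Z| <= `|X| + `|Z|.
Proof.
move=> hp hq; apply: (le_trans (ler_normD _ _)); rewrite !normrM; apply: lerD.
  by rewrite -[leRHS]mul1r ler_wpM2r.
by rewrite -[leRHS]mul1r ler_wpM2r.
Qed.

Lemma A_r0_add (r r' : R) : A (r + r') 0 = A r 0 + A r' 0.
Proof. by rewrite -Af_add // addr0. Qed.
Lemma B_r0_add (r r' : R) : B (r + r') 0 = B r 0 + B r' 0.
Proof. by rewrite -Bf_add // addr0. Qed.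

Lemma unit_bound (r : R) : 0 <= r <= 1 ->
  `|A r 0| <= 2 * (`|A 1 0| + `|B 1 0|) /\ `|B r 0| <= 2 * (`|A 1 0| + `|B 1 0|).
Proof.
move=> /andP [r0 r1].
set s := Num.sqrt (1 - (r / 2) ^+ 2).
have hs0 : 0 <= 1 - (r / 2) ^+ 2 by nra.
have hs : (r / 2) ^+ 2 + s ^+ 2 = 1 by rewrite sqr_sqrtr //; ring.
have hs' : (r / 2) ^+ 2 + (- s) ^+ 2 = 1 by rewrite sqrrN.
have [a1 b1] := intertwine phiM (mkSO2 hs) 1 0.
have [a2 b2] := intertwine phiM (mkSO2 hs') 1 0.
rewrite !pc_mk !qc_mk !mulr1 !mulr0 !subr0 !addr0 in a1 b1 a2 b2.
have eA : A r 0 = A (r / 2) s + A (r / 2) (- s).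
  by rewrite -Af_add //; congr Af; [field | rewrite subrr].
have eB : B r 0 = B (r / 2) s + B (r / 2) (- s).
  by rewrite -Bf_add //; congr Bf; [field | rewrite subrr].
have K1 (k : SO2 R) : `|pc (sigma phi k) * A 1 0 - qc (sigma phi k) * B 1 0| <= `|A 1 0| + `|B 1 0|.
  by rewrite -mulNr; apply: comb_le; rewrite ?normrN ?pc_le1 ?qc_le1.
have K2 (k : SO2 R) : `|qc (sigma phi k) * A 1 0 + pc (sigma phi k) * B 1 0| <= `|A 1 0| + `|B 1 0|.
  by apply: comb_le; rewrite ?pc_le1 ?qc_le1.
split.
- rewrite eA a1 a2; apply: (le_trans (ler_normD _ _)).
  apply: (le_trans (lerD (K1 _) (K1 _))); lra.
- rewrite eB b1 b2; apply: (le_trans (ler_normD _ _)).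
  apply: (le_trans (lerD (K2 _) (K2 _))); lra.
Qed.

Lemma A_lin_r (r : R) : A r 0 = r * A 1 0.
Proof.
apply: (@bounded_additive _ (fun r => A r 0) (2 * (`|A 1 0| + `|B 1 0|))).
  exact: A_r0_add.
by move=> t ht; case: (unit_bound ht).
Qed.
Lemma B_lin_r (r : R) : B r 0 = r * B 1 0.
Proof.
apply: (@bounded_additive _ (fun r => B r 0) (2 * (`|A 1 0| + `|B 1 0|))).
  exact: B_r0_add.
by move=> t ht; case: (unit_bound ht).
Qed.

Lemma AB_0v (v : R) : A 0 v = v * A 0 1 /\ B 0 v = v * B 0 1.
Proof.
have [a1 b1] := intertwine phiM (SJ R) v 0.
have [a2 b2] := intertwine phiM (SJ R) 1 0.
rewrite /SJ !pc_mk !qc_mk !mul0r !mulr0 !mul1r !subr0 !addr0 in a1 b1 a2 b2.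
rewrite a1 b1 a2 b2 (A_lin_r v) (B_lin_r v); split; ring.
Qed.

Lemma A_lin (u v : R) : A u v = u * A 1 0 + v * A 0 1.
Proof.
have -> : A u v = A (u + 0) (0 + v) by rewrite addr0 add0r.
by rewrite Af_add // (A_lin_r u); case: (AB_0v v) => -> _.
Qed.
Lemma B_lin (u v : R) : B u v = u * B 1 0 + v * B 0 1.
Proof.
have -> : B u v = B (u + 0) (0 + v) by rewrite addr0 add0r.
by rewrite Bf_add // (B_lin_r u); case: (AB_0v v) => _ ->.
Qed.

End Lin.

Local Open Scope ring_scope.

Set Implicit Arguments.
Unset Strict Implicit.
Unset Printing Implicit Defensive.

Section Main.
Variable R : realType.
Variable D : Zsubgroup R.
Local Notation W := (Walnut D).
Local Notation one := (SO2one R).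
Local Notation zc := (@zc R D).
Local Notation ek := (@ek R D).
Local Notation iotaW := (@iotaW R D).
Variable phi : W -> W.
Hypothesis phiM : group_hom (@Wmul R D) phi.
Hypothesis phi_inj : injective phi.

Local Notation A := (Af phi).
Local Notation B := (Bf phi).

Lemma tc_refl (x : W) : twisted_conj (@Wmul R D) (@Winv R D) phi x x.
Proof. by exists W1; rewrite (phi1 phiM) Winv1 Wmul1 Wmulr1. Qed.

Lemma infinite_from_family (F : nat -> W) :
  (forall n m, twisted_conj (@Wmul R D) (@Winv R D) phi (F n) (F m) -> n = m) ->
  Reidemeister_infinite (@Wmul R D) (@Winv R D) phi.
Proof.
move=> hF fin.
pose G n := [set y | twisted_conj (@Wmul R D) (@Winv R D) phi (F n) y]%classic.
have Ginj : injective G.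
  move=> n m e; apply: hF.
  have : G m (F m) by exact: tc_refl.
  by rewrite -e.
have := finite_preimage (f := G) (fun a _ b _ h => Ginj _ _ h) fin.
have -> : (G @^-1` twisted_classes (@Wmul R D) (@Winv R D) phi)%classic = setT.
  by apply/seteqP; split => // n _; exists (F n).
exact: infinite_nat.
Qed.

Definition delta := A 1 0 * B 0 1 - A 0 1 * B 1 0.

Lemma phi_zc_lin (d : R) : phi (zc d) = zc (delta * d).
Proof.
rewrite (phi_zc phiM) (A_lin_r phiM d) (B_lin_r phiM d) /delta; congr zc; ring.
Qed.

Lemma delta_unit : discrete_subset (zcarrier D) -> infinite_set (zcarrier D) ->
  `|delta| = 1.
Proof.
move=> hdisc hinf.
have [d0 [Dd0 d0n]] : exists d0, zcarrier D d0 /\ d0 != 0.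
  case: (pselect (exists d0, zcarrier D d0 /\ d0 != 0)) => // nex.
  exfalso; apply: hinf; apply: (sub_finite_set _ (finite_set1 0)).
  move=> d Dd; apply/eqP/negPn/negP => dn; apply: nex; exists d; split => //.
apply: (disc_scale (D0 D) hdisc Dd0 d0n).
- move=> d Dd; apply/(zc_D D _); rewrite -phi_zc_lin.
  by move/(zc_D D _): Dd => ->; rewrite (phi1 phiM).
- move=> c Dc; apply/(zc_D D _); apply: phi_inj.
  by rewrite phi_zc_lin (phi1 phiM); apply/(zc_D D _).
Qed.

Lemma Eqs (k : SO2 R) :
 [/\ pc k * A 1 0 + qc k * A 0 1 = pc (sigma phi k) * A 1 0 - qc (sigma phi k) * B 1 0,
     pc k * B 1 0 + qc k * B 0 1 = qc (sigma phi k) * A 1 0 + pc (sigma phi k) * B 1 0,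
     - qc k * A 1 0 + pc k * A 0 1 = pc (sigma phi k) * A 0 1 - qc (sigma phi k) * B 0 1 &
     - qc k * B 1 0 + pc k * B 0 1 = qc (sigma phi k) * A 0 1 + pc (sigma phi k) * B 0 1].
Proof.
have [a1 b1] := intertwine phiM k 1 0.
have [a2 b2] := intertwine phiM k 0 1.
rewrite !mulr1 !mulr0 !subr0 !addr0 !sub0r !add0r in a1 b1 a2 b2.
rewrite (A_lin phiM (pc k)) in a1; rewrite (B_lin phiM (pc k)) in b1.
rewrite (A_lin phiM (- qc k)) in a2; rewrite (B_lin phiM (- qc k)) in b2.
by split; [rewrite a1 | rewrite b1 | rewrite a2 | rewrite b2].
Qed.

End Main.

Local Open Scope ring_scope.

Set Implicit Arguments.
Unset Strict Implicit.
Unset Printing Implicit Defensive.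

Section Case1.
Variable R : realType.
Variable D : Zsubgroup R.
Local Notation W := (Walnut D).
Local Notation one := (SO2one R).
Local Notation ek := (@ek R D).
Variable phi : W -> W.
Hypothesis phiM : group_hom (@Wmul R D) phi.
Hypothesis phi_inj : injective phi.

Lemma SO2conj (a b : SO2 R) : SO2mul (SO2mul a b) (SO2inv a) = b.
Proof. by rewrite SO2mulC SO2mulA SO2mulV SO2mul1. Qed.

Definition kp (n : nat) : R := (n.+1%:R)^-1.
Lemma kp_sq n : kp n ^+ 2 + (Num.sqrt (1 - kp n ^+ 2)) ^+ 2 = 1.
Proof.
have h0 : 0 <= kp n by rewrite /kp invr_ge0.
have h1 : kp n <= 1 by rewrite /kp invf_le1 // ler1n.
rewrite sqr_sqrtr; first by ring.
rewrite subr_ge0; nra.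
Qed.

Lemma case_id : (forall k, sigma phi k = k) ->
  Reidemeister_infinite (@Wmul R D) (@Winv R D) phi.
Proof.
move=> hs; apply: (@infinite_from_family _ _ _ phiM (fun n => ek (mkSO2 (kp_sq n)))).
move=> n m [g e].
have := congr1 (@rho R D) e.
rewrite !rhoM rhoV (rhophi phiM) hs !rho_ek SO2conj => /(congr1 (@pc R)).
rewrite !pc_mk /kp => /invr_inj /eqP; rewrite eqr_nat eqSS => /eqP ->.
by [].
Qed.

End Case1.

Local Open Scope ring_scope.

Set Implicit Arguments.
Unset Strict Implicit.
Unset Printing Implicit Defensive.

Section Case2.
Variable R : realType.
Variable D : Zsubgroup R.
Local Notation W := (Walnut D).
Local Notation one := (SO2one R).
Local Notation ek := (@ek R D).
Local Notation iotaW := (@iotaW R D).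
Variable phi : W -> W.
Hypothesis phiM : group_hom (@Wmul R D) phi.
Hypothesis phi_inj : injective phi.
Hypothesis hdisc : discrete_subset (zcarrier D).
Hypothesis hinf : infinite_set (zcarrier D).
Variable k0 : SO2 R.
Hypothesis hk0 : sigma phi k0 != k0.

Local Notation xx := (Af phi 1 0).
Local Notation yy := (Af phi 0 1).
Local Notation zz := (Bf phi 1 0).
Local Notation ww := (Bf phi 0 1).

Lemma P12 : xx + ww = 0 /\ zz - yy = 0.
Proof.
have [E1 E2 E3 E4] := Eqs phiM k0.
set p := pc k0 in E1 E2 E3 E4; set q := qc k0 in E1 E2 E3 E4.
set p' := pc (sigma phi k0) in E1 E2 E3 E4; set q' := qc (sigma phi k0) in E1 E2 E3 E4.
have c1 : (p - p') * (xx + ww) - (q - q') * (zz - yy) = 0.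
  have -> : (p - p') * (xx + ww) - (q - q') * (zz - yy) =
    (p * xx + q * yy - (p' * xx - q' * zz)) + (- q * zz + p * ww - (q' * yy + p' * ww)) by ring.
  by rewrite E1 E4 !subrr ?addr0.
have c2 : (p - p') * (zz - yy) + (q - q') * (xx + ww) = 0.
  have -> : (p - p') * (zz - yy) + (q - q') * (xx + ww) =
    (p * zz + q * ww - (q' * xx + p' * zz)) - (- q * xx + p * yy - (p' * yy - q' * ww)) by ring.
  by rewrite E2 E3 !subrr.
have S0 : (p - p') ^+ 2 + (q - q') ^+ 2 != 0.
  apply/negP => /eqP h; have [h1 h2] := sq0 h.
  move/negP: hk0; apply; apply/eqP; apply: SO2_eqP.
    by move/eqP: h1; rewrite subr_eq0 => /eqP.
  by move/eqP: h2; rewrite subr_eq0 => /eqP.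
have e1 : ((p - p') ^+ 2 + (q - q') ^+ 2) * (xx + ww) = 0.
  have -> : ((p - p') ^+ 2 + (q - q') ^+ 2) * (xx + ww) =
    (p - p') * ((p - p') * (xx + ww) - (q - q') * (zz - yy)) +
    (q - q') * ((p - p') * (zz - yy) + (q - q') * (xx + ww)) by ring.
  by rewrite c1 c2 !mulr0 addr0.
have e2 : ((p - p') ^+ 2 + (q - q') ^+ 2) * (zz - yy) = 0.
  have -> : ((p - p') ^+ 2 + (q - q') ^+ 2) * (zz - yy) =
    (p - p') * ((p - p') * (zz - yy) + (q - q') * (xx + ww)) -
    (q - q') * ((p - p') * (xx + ww) - (q - q') * (zz - yy)) by ring.
  by rewrite c1 c2 !mulr0 subr0.
move/eqP: e1; move/eqP: e2; rewrite !mulf_eq0 (negPf S0) /= => /eqP -> /eqP ->.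
by [].
Qed.

Lemma ww_eq : ww = - xx.
Proof. by have [h _] := P12; apply/eqP; rewrite -addr_eq0 addrC h. Qed.
Lemma yy_eq : yy = zz.
Proof. by have [_ h] := P12; apply/eqP; rewrite eq_sym -subr_eq0 h. Qed.

Lemma xz1 : xx ^+ 2 + zz ^+ 2 = 1.
Proof.
have := delta_unit phiM phi_inj hdisc hinf; rewrite /delta ww_eq yy_eq.
have -> : xx * - xx - zz * zz = - (xx ^+ 2 + zz ^+ 2) by ring.
by rewrite normrN ger0_norm // addr_ge0 // sqr_ge0.
Qed.

Lemma fixed_q (m : SO2 R) : sigma phi m = m -> qc m = 0.
Proof.
move=> hm; have [E1 E2 _ _] := Eqs phiM m; rewrite hm ww_eq yy_eq in E1 E2.
have h1 : qc m * zz = 0 by lra.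
have h2 : qc m * xx = 0 by lra.
have -> : qc m = qc m * (xx ^+ 2 + zz ^+ 2) by rewrite xz1 mulr1.
have -> : qc m * (xx ^+ 2 + zz ^+ 2) = (qc m * xx) * xx + (qc m * zz) * zz by ring.
by rewrite h1 h2 !mul0r addr0.
Qed.

Lemma ell : exists l1 l2 : R, [/\ 0 < l1 ^+ 2 + l2 ^+ 2, l1 * xx + l2 * zz = l1
   & l1 * zz - l2 * xx = l2].
Proof.
have h := xz1.
case: (eqVneq ((1 + xx) ^+ 2 + zz ^+ 2) 0) => [e|ne].
  exists zz, (1 - xx); have [h1 h2] := sq0 e; split.
  - have -> : xx = -1 by lra.
    rewrite h2; lra.
  - nra.
  - nra.
exists (1 + xx), zz; split.
- by rewrite lt_def ne addr_ge0 ?sqr_ge0.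
- nra.
- nra.
Qed.

Lemma mone_sq : (-1 : R) ^+ 2 + 0 ^+ 2 = 1.
Proof. by rewrite sqrrN expr1n expr0n addr0. Qed.
Definition mone : SO2 R := mkSO2 mone_sq.

Definition cm (m : SO2 R) : W := Wmul (ek m) (Winv (phi (ek m))).

Lemma WmulKV (a b : W) : Wmul (Winv a) (Wmul a b) = b.
Proof. by rewrite WmulA WmulV Wmul1. Qed.

Lemma decomp_tc (g x n e P Q : W) : g = Wmul n e ->
  Wmul (Wmul g x) (Winv (Wmul P Q)) =
  Wmul (conjW g x) (Wmul (Wmul n (Wmul e (Winv Q))) (Winv P)).
Proof.
move=> ->; rewrite /conjW !WinvM -!WmulA.
by rewrite WmulKV WmulKV.
Qed.

Lemma SO2_inv_eq (a b : SO2 R) : one = SO2mul a (SO2inv b) -> b = a.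
Proof.
move=> h; rewrite -(SO2mul1 b) h -SO2mulA SO2mulV.
by rewrite SO2mulC SO2mul1.
Qed.

Variables l1 l2 : R.
Hypothesis hl1 : l1 * xx + l2 * zz = l1.
Hypothesis hl2 : l1 * zz - l2 * xx = l2.

Definition Lval (w : W) := l1 * pa w + l2 * pb w.

Lemma L_A (u v : R) : l1 * Af phi u v + l2 * Bf phi u v = l1 * u + l2 * v.
Proof.
rewrite (A_lin phiM u v) (B_lin phiM u v) yy_eq ww_eq.
have -> : l1 * (u * xx + v * zz) + l2 * (u * zz + v * - xx) =
  u * (l1 * xx + l2 * zz) + v * (l1 * zz - l2 * xx) by ring.
by rewrite hl1 hl2; ring.
Qed.

Lemma key (x y : W) : rho x = one -> rho y = one ->
  twisted_conj (@Wmul R D) (@Winv R D) phi x y ->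
  Lval y = Lval x + Lval (cm one) \/ Lval y = - Lval x + Lval (cm mone).
Proof.
move=> hx hy [g e].
set m := rho g.
have hsm : sigma phi m = m.
  have := congr1 (@rho R D) e; rewrite hy !rhoM rhoV (rhophi phiM) hx.
  by rewrite (SO2mulC _ one) SO2mul1 => /SO2_inv_eq.
have hq := fixed_q hsm.
have hg := split_a g.
set n := piW _ in hg.
have ephi : phi g = Wmul (phi n) (phi (ek m)) by rewrite {1}hg phiM.
rewrite ephi (@decomp_tc g x n (ek m) (phi n) (phi (ek m)) hg) in e.
have rn : rho n = one by rewrite /n rhoE.
have rcm : rho (cm m) = one.
  by rewrite /cm rhoM rhoV (rhophi phiM) !rho_ek hsm SO2mulC SO2mulV.
have [rc pac pbc] := conjN g hx.
have rpn : rho (phi n) = one := rhophiN phiM rn.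
have [pan pbn] := phiN_proj phiM rn.
have ecm : Wmul (ek m) (Winv (phi (ek m))) = cm m by [].
rewrite ecm in e.
have rnc := rhoMN rn rcm.
have Ly : Lval y = pc m * Lval x + Lval (cm m).
  rewrite e /Lval (paMN _ rc) (pbMN _ rc) (paMN _ rnc) (pbMN _ rnc).
  rewrite (paMN _ rn) (pbMN _ rn) (paVN rpn) (pbVN rpn).
  rewrite pac pbc -/m hq pan pbn.
  have := L_A (pa n) (pb n); lra.
have hp : pc m = 1 \/ pc m = -1.
  have := pq1 m; rewrite hq expr0n addr0 => h.
  have e2 : (pc m - 1) * (pc m + 1) = pc m ^+ 2 - 1 by rewrite expr2; ring.
  have : (pc m - 1) * (pc m + 1) = 0 by rewrite e2 h subrr.
  move/eqP; rewrite mulf_eq0 => /orP [/eqP h1|/eqP h1]; [left|right]; lra.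
case: hp => hp.
- left; have em : m = one by apply: SO2_eqP; rewrite ?hp ?hq ?pc_one ?qc_one.
  by rewrite Ly hp mul1r em.
- right; have em : m = mone by apply: SO2_eqP; rewrite /mone ?pc_mk ?qc_mk.
  by rewrite Ly hp mulN1r em.
Qed.

Lemma nat_sep (K k1 k2 : R) (n m : nat) : 0 <= K -> `|k1| <= K -> `|k2| <= K ->
  (m%:R * (K + 1) = n%:R * (K + 1) + k1 \/ m%:R * (K + 1) = - (n%:R * (K + 1)) + k2) ->
  n = m.
Proof.
move=> K0; rewrite !ler_norml => /andP [a1 a2] /andP [b1 b2] [] e.
- case: (ltngtP n m) => // hnm; exfalso.
  + have : n%:R + 1 <= m%:R :> R by rewrite natr1 ler_nat.
    nra.
  + have : m%:R + 1 <= n%:R :> R by rewrite natr1 ler_nat.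
    nra.
- case: n e => [|n] e; case: m e => [|m] e //; exfalso.
  + have : 1 <= (m.+1)%:R :> R by rewrite ler1n.
    have : 0 <= (0%N)%:R :> R by [].
    nra.
  + have : 1 <= (n.+1)%:R :> R by rewrite ler1n.
    have : 0 <= (0%N)%:R :> R by [].
    nra.
  + have : 1 <= (n.+1)%:R :> R by rewrite ler1n.
    have : 1 <= (m.+1)%:R :> R by rewrite ler1n.
    nra.
Qed.

Hypothesis hL : 0 < l1 ^+ 2 + l2 ^+ 2.

Lemma case2_fam : Reidemeister_infinite (@Wmul R D) (@Winv R D) phi.
Proof.
set K := `|Lval (cm one)| + `|Lval (cm mone)|.
set T := (K + 1) / (l1 ^+ 2 + l2 ^+ 2).
apply: (@infinite_from_family _ _ _ phiM (fun n => iotaW (n%:R * T * l1) (n%:R * T * l2))).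
move=> n m h.
have LF (k : nat) : Lval (iotaW (k%:R * T * l1) (k%:R * T * l2)) = k%:R * (K + 1).
  rewrite /Lval pa_iota pb_iota /T; field.
  by rewrite gt_eqF.
have := key (rho_iota D _ _) (rho_iota D _ _) h; rewrite !LF => hh.
apply: (@nat_sep K (Lval (cm one)) (Lval (cm mone))) => //.
- by rewrite /K addr_ge0.
- by rewrite /K lerDl.
- by rewrite /K lerDr.
Qed.

End Case2.

Theorem walnut_main (R : realType) (D : Zsubgroup R) :
  discrete_subset (zcarrier D) -> infinite_set (zcarrier D) ->
  topological_R_infinity (@Wmul R D) (@Winv R D).
Proof.
move=> hdisc hinf phi [phiM [psi [c1 c2 _ _]]].
have phi_inj : injective phi by exact: can_inj c1.
case: (pselect (forall k, sigma phi k = k)) => [hs|hns].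
  exact: case_id phiM hs.
have [k0 hk0] : exists k0, sigma phi k0 != k0.
  apply: contra_notP hns => nex k; apply/eqP/negPn/negP => hk; apply: nex; by exists k.
have [l1 [l2 [hL hl1 hl2]]] := ell phiM phi_inj hdisc hinf hk0.
exact: (case2_fam phiM phi_inj hdisc hinf hk0 hl1 hl2 hL).
Qed.

Theorem proposition5p6 (R : realType) (D : Zsubgroup R) :
  discrete_subset (zcarrier D) -> infinite_set (zcarrier D) ->
  topological_R_infinity (@Wmul R D) (@Winv R D).
Proof. exact: walnut_main. Qed.
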